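(* Let $d\in\mathbb{Z}_2^{l+r}$ and let $A\subset\mathbb{Z}_2^{l+r}$ be a subgroup. Then $d(A^\perp)=(A^d)^{\perp_d}$, where $d(A^\perp)=\{d\alpha:\alpha\in A^\perp\}$.
   Context: Products of codewords are componentwise. For $c\in\mathbb{Z}_2^{l+r}$, $|c|=|c|_l-|c|_r$, where $|c|_l,|c|_r$ are the numbers of ones in the first $l$ and last $r$ coordinates. $A^\perp=\{\beta\in\mathbb{Z}_2^{l+r}:|\beta a|\in2\mathbb{Z}\ \forall a\in A\}$. $\mathbb{Z}_2^d=\{\alpha:d\alpha=\alpha\}$, $A^d=A\cap\mathbb{Z}_2^d$, and for a subgroup $H\subset\mathbb{Z}_2^d$, $H^{\perp_d}=\{\alpha\in\mathbb{Z}_2^d:|\alpha h|\in2\mathbb{Z}\ \forall h\in H\}$. *)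

(* Defs.v *)
From mathcomp Require Import all_boot all_order all_algebra.
Set Implicit Arguments. Unset Strict Implicit. Unset Printing Implicit Defensive.
Import GRing.Theory.
Local Open Scope ring_scope.

Definition vec (l r : nat) := 'rV['F_2]_(l + r).

Definition cmul (l r : nat) (a b : vec l r) : vec l r :=
  \row_i (a 0 i * b 0 i).

Definition wt_l (l r : nat) (c : vec l r) : nat :=
  #|[set i : 'I_(l + r) | (i < l)%N && (c 0 i != 0)]|.
Definition wt_r (l r : nat) (c : vec l r) : nat :=
  #|[set i : 'I_(l + r) | (l <= i)%N && (c 0 i != 0)]|.

Definition sw (l r : nat) (c : vec l r) : int := (wt_l c)%:Z - (wt_r c)%:Z.

Definition evenZ (z : int) : bool := (2 %| z)%Z.

Definition is_subgroup (l r : nat) (A : {set vec l r}) : Prop :=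
  (0 \in A) /\ (forall x y, x \in A -> y \in A -> x + y \in A)
  /\ (forall x, x \in A -> - x \in A).

Definition perp (l r : nat) (A : {set vec l r}) : {set vec l r} :=
  [set b | [forall a in A, evenZ (sw (cmul b a))]].

Definition Z2d (l r : nat) (d : vec l r) : {set vec l r} :=
  [set a | cmul d a == a].

Definition restr (l r : nat) (A : {set vec l r}) (d : vec l r) : {set vec l r} :=
  A :&: Z2d d.

Definition perp_d (l r : nat) (d : vec l r) (H : {set vec l r}) : {set vec l r} :=
  [set a in Z2d d | [forall h in H, evenZ (sw (cmul a h))]].

Definition dimage (l r : nat) (d : vec l r) (S : {set vec l r}) : {set vec l r} :=
  [set cmul d a | a in S].

(* Main.v *)
Require Import Defs.
From mathcomp Require Import all_boot all_order all_algebra.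
From mathcomp Require Import zify.
Set Implicit Arguments. Unset Strict Implicit.
Import GRing.Theory.
Local Open Scope ring_scope.

Lemma F2c (x : 'F_2) : x = 0 \/ x = 1.
Proof. case: x => [[|[|k]] Hk]; [left|right|by []]; exact: val_inj. Qed.

Lemma natF2 (n : nat) : (n%:R : 'F_2) = (odd n)%:R.
Proof. elim: n => // n IH. rewrite -natr1 IH /=. case: (odd n) => /=; [exact: val_inj | by rewrite add0r]. Qed.

Lemma F2nz (x : 'F_2) : x = (x != 0)%:R.
Proof. by case: (F2c x) => ->. Qed.

Lemma evenZ_odd (a b : nat) : evenZ (a%:Z - b%:Z) = ~~ odd (a + b).
Proof. rewrite /evenZ -dvdn2. apply/idP/idP => H; lia. Qed.

Definition dot n (x y : 'rV['F_2]_n) : 'F_2 := (x *m y^T) 0 0.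

Lemma sw_dot (l r : nat) (b a : vec l r) : evenZ (sw (cmul b a)) = (dot b a == 0).
Proof.
rewrite /sw evenZ_odd /dot mxE.
have -> : \sum_j b 0 j * a^T j 0 = \sum_j ((cmul b a 0 j != 0 : nat)%:R : 'F_2).
  by apply: eq_bigr => j _; rewrite !mxE [LHS]F2nz.
rewrite -natr_sum natF2.
set c := cmul b a.
have -> : (\sum_i (c 0%R i != 0%R : nat))%N = #|[set i | c 0 i != 0]|.
  rewrite -sum1_card [RHS]big_mkcond /=; apply: eq_bigr => i _; rewrite inE; by case: (c 0 i != 0).
rewrite -(cardID [pred i : 'I_(l + r) | (i < l)%N] [set i | c 0 i != 0]) /wt_l /wt_r.
have -> : #|[predI [set i | c 0 i != 0] & [pred i : 'I_(l + r) | (i < l)%N]]| =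
   #|[set i : 'I_(l + r) | (i < l)%N && (c 0 i != 0)]|.
  apply: eq_card => i; rewrite !inE /=; by rewrite andbC.
have -> : #|[predD [set i | c 0 i != 0] & [pred i : 'I_(l + r) | (i < l)%N]]| =
   #|[set i : 'I_(l + r) | (l <= i)%N && (c 0 i != 0)]|.
  by apply: eq_card => i; rewrite !inE /= [in RHS]leqNgt.
by case: odd; rewrite ?oner_eq0 ?eqxx.
Qed.

Section LA.
Variable n : nat.
Implicit Types (x y : 'rV['F_2]_n) (S : {set 'rV['F_2]_n}).

Definition perpS S : {set 'rV['F_2]_n} := [set x | [forall s in S, dot x s == 0]].
Definition spanS m (M : 'M['F_2]_(m, n)) : {set 'rV['F_2]_n} := [set x | (x <= M)%MS].

Lemma perp_span m (M : 'M['F_2]_(m, n)) : perpS (spanS M) = spanS (kermx M^T).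
Proof.
apply/setP => x; rewrite !inE sub_kermx; apply/forall_inP/eqP => [H | H y].
  apply/rowP => j; rewrite [RHS]mxE.
  have := H (row j M); rewrite inE row_sub => /(_ isT)/eqP <-.
  rewrite /dot !mxE; apply: eq_bigr => k _; by rewrite !mxE.
rewrite inE => /submxP [u ->].
by rewrite /dot trmx_mul mulmxA H mul0mx mxE.
Qed.

Lemma kerker m (M : 'M['F_2]_(m, n)) : (kermx (kermx M^T)^T == M)%MS.
Proof.
have sub : (M <= kermx (kermx M^T)^T)%MS.
  by rewrite sub_kermx -[X in X *m _]trmxK -trmx_mul mulmx_ker trmx0.
have [_ E] := mxrank_leqif_eq sub.
have : (M == kermx (kermx M^T)^T)%MS.
  by rewrite -E mxrank_ker mxrank_tr mxrank_ker mxrank_tr subKn ?rank_leq_col.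
by case/andP => H1 H2; apply/andP.
Qed.

Lemma perpperp_span m (M : 'M['F_2]_(m, n)) : perpS (perpS (spanS M)) = spanS M.
Proof.
rewrite !perp_span; apply/setP => x; rewrite !inE.
by apply/idP/idP => H; apply: submx_trans H _; case/andP: (kerker M).
Qed.

Lemma subgroup_span S : 0 \in S -> (forall x y, x \in S -> y \in S -> x + y \in S) ->
  spanS (\matrix_(i < #|S|) nth 0 (enum S) i) = S.
Proof.
move=> S0 SD; apply/setP => x; rewrite inE; apply/idP/idP.
  case/submxP => u ->; rewrite mulmx_sum_row.
  apply: (big_ind (fun v => v \in S)) => // i _.
  have Hi : nth 0 (enum S) i \in S by rewrite -mem_enum mem_nth // -cardE.
  case: (F2c (u 0 i)) => ->; first by rewrite scale0r.
  by rewrite scale1r rowK.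
move=> xS.
have Hi : (index x (enum S) < #|S|)%N by rewrite cardE index_mem mem_enum.
have := row_sub (Ordinal Hi) (\matrix_(i < #|S|) nth 0 (enum S) i).
by rewrite rowK /= nth_index // mem_enum.
Qed.

Lemma perpperp S : 0 \in S -> (forall x y, x \in S -> y \in S -> x + y \in S) ->
  perpS (perpS S) = S.
Proof. move=> S0 SD; by rewrite -{1 2}(subgroup_span S0 SD) perpperp_span subgroup_span. Qed.

Lemma perp0 S : 0 \in perpS S.
Proof. rewrite inE; apply/forall_inP => s _; by rewrite /dot mul0mx mxE. Qed.

Lemma perpD S x y : x \in perpS S -> y \in perpS S -> x + y \in perpS S.
Proof.
rewrite !inE => /forall_inP Hx /forall_inP Hy; apply/forall_inP => s sS.
have -> : dot (x + y) s = dot x s + dot y s.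
  by rewrite /dot !mxE -big_split /=; apply: eq_bigr => k _; rewrite !mxE mulrDl.
by rewrite (eqP (Hx s sS)) (eqP (Hy s sS)) addr0.
Qed.

End LA.

Lemma F2idem (x : 'F_2) : x * x = x.
Proof. by case: (F2c x) => ->; rewrite ?mul0r ?mul1r. Qed.

Lemma cmul_idem (l r : nat) (d a : vec l r) : cmul d (cmul d a) = cmul d a.
Proof. by apply/rowP => i; rewrite !mxE mulrA F2idem. Qed.

Lemma cmulD (l r : nat) (d a b : vec l r) : cmul d (a + b) = cmul d a + cmul d b.
Proof. by apply/rowP => i; rewrite !mxE mulrDr. Qed.

Lemma cmul0 (l r : nat) (d : vec l r) : cmul d 0 = 0.
Proof. by apply/rowP => i; rewrite !mxE mulr0. Qed.

Lemma dot_cmul (l r : nat) (d a h : vec l r) : dot (cmul d a) h = dot a (cmul d h).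
Proof. rewrite /dot !mxE; apply: eq_bigr => k _; by rewrite !mxE mulrCA mulrA. Qed.

Lemma dotC n (a b : 'rV['F_2]_n) : dot a b = dot b a.
Proof. rewrite /dot !mxE; apply: eq_bigr => k _; by rewrite !mxE mulrC. Qed.

Lemma perp_eq (l r : nat) (A : {set vec l r}) : perp A = perpS A.
Proof. apply/setP => x; rewrite !inE; apply: eq_forallb => a; by rewrite sw_dot. Qed.

Lemma perpd_eq (l r : nat) (d : vec l r) (H : {set vec l r}) :
  perp_d d H = Z2d d :&: perpS H.
Proof. apply/setP => x; rewrite !inE; congr (_ && _); apply: eq_forallb => a; by rewrite sw_dot. Qed.

Theorem mainTheorem13 (l r : nat) (d : vec l r) (A : {set vec l r}) :
  is_subgroup A ->
  dimage d (perp A) = perp_d d (restr A d).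
Proof.
move=> [A0 [AD _]].
rewrite perp_eq perpd_eq /restr /dimage.
set W := [set cmul d a | a in perpS A].
have W0 : 0 \in W by apply/imsetP; exists 0; rewrite ?perp0 ?cmul0.
have WD : forall x y, x \in W -> y \in W -> x + y \in W.
  move=> x y /imsetP [a Ha ->] /imsetP [b Hb ->]; apply/imsetP; exists (a + b).
    exact: perpD.
  by rewrite cmulD.
apply/setP => x; apply/idP/idP.
  case/imsetP => a Ha ->; rewrite inE; apply/andP; split.
    by rewrite inE cmul_idem.
  rewrite inE; apply/forall_inP => h; rewrite !inE => /andP [hA hd].
  rewrite dot_cmul (eqP hd).
  by move: Ha; rewrite inE => /forall_inP /(_ h hA).
rewrite inE => /andP [xd xP].
rewrite -(perpperp W0 WD) inE; apply/forall_inP => h hW.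
move: xd; rewrite inE => /eqP <-; rewrite dot_cmul.
move: xP; rewrite inE => /forall_inP; apply; rewrite !inE cmul_idem eqxx andbT.
rewrite -(perpperp A0 AD) inE; apply/forall_inP => al hal.
rewrite dot_cmul.
have hW' : cmul d al \in W by apply: imset_f.
by move: hW; rewrite inE => /forall_inP /(_ _ hW').
Qed.
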